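(* Under the full-support assumption, for any $\eta>0$ and any OMWU initialization $\hat{\bm\pi}^{(1)}$ with positive entries, $p(\hat{\bm\pi}^{(1)})=p(\hat{\bm\pi}^{(2)})=\cdots=p(\hat{\bm\pi}^{(t)})$ for all $t\ge1$.
   Context: $\mathbb{A}$ is a finite set, $\Delta(\mathbb{A})$ the probability simplex, $\bm P\in\mathbb{R}^{\mathbb{A}\times\mathbb{A}}$ skew-symmetric. $\mathbb{M}$ is the set of Nash equilibria: ${\bm\pi}\in\Delta(\mathbb{A})$ with $\max_a(\bm P{\bm\pi})_a\le 0$. Full-support assumption: for every $a$ there exists ${\bm\pi}\in\mathbb{M}$ with $\pi_a>0$. For ${\bm\pi}$ with positive entries, $p({\bm\pi})=\arg\min_{{\bm\pi}'\in\mathbb{M}}D_{\mathrm{KL}}({\bm\pi}'\|{\bm\pi})$. OMWU: ${\bm\pi}^{(0)}=\hat{\bm\pi}^{(1)}$, and for $t\ge1$, $\pi^{(t)}_a\propto\hat\pi^{(t)}_a e^{\eta(\bm P{\bm\pi}^{(t-1)})_a}$ and $\hat\pi^{(t+1)}_a\propto\hat\pi^{(t)}_a e^{\eta(\bm P{\bm\pi}^{(t)})_a}$ (each normalized to sum to 1). *)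

(* Defs.v *)
From HB Require Import structures.
From mathcomp Require Import all_boot all_order all_algebra.
From mathcomp Require Import reals sequences exp.
Set Implicit Arguments. Unset Strict Implicit. Unset Printing Implicit Defensive.
Import Order.TTheory GRing.Theory Num.Theory.
Local Open Scope ring_scope.

Section Defs.
Variables (R : realType) (A : finType).

Definition matvec (P : A -> A -> R) (pi : A -> R) (a : A) : R :=
  \sum_(b : A) P a b * pi b.

Definition skew_symmetric (P : A -> A -> R) : Prop :=
  forall a b, P a b = - P b a.

Definition in_simplex (pi : A -> R) : Prop :=
  (forall a, 0 <= pi a) /\ \sum_(a : A) pi a = 1.

Definition nash_set (P : A -> A -> R) (pi : A -> R) : Prop :=
  in_simplex pi /\ \big[Order.max/0]_(a : A) matvec P pi a <= 0.
(* note: the \big[max/0] includes 0, so this is "max_a (P pi)_a <= 0". *)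

Definition full_support (P : A -> A -> R) : Prop :=
  forall a, exists pi, nash_set P pi /\ 0 < pi a.

Definition KL (pi' pi : A -> R) : R :=
  \sum_(a : A) (if pi' a == 0 then 0 else pi' a * ln (pi' a / pi a)).

(* x is an element of argmin_{pi' in M} KL(pi' || pi), i.e. x = p(pi). *)
Definition is_KL_proj (P : A -> A -> R) (pi x : A -> R) : Prop :=
  nash_set P x /\ forall y, nash_set P y -> KL x pi <= KL y pi.

Definition mw_update (eta : R) (q g : A -> R) (a : A) : R :=
  q a * expR (eta * g a) / \sum_(b : A) q b * expR (eta * g b).

(* omwu_state P eta pi1 k = (hat pi^(k+1), pi^(k)). *)
Fixpoint omwu_state (P : A -> A -> R) (eta : R) (pi1 : A -> R) (k : nat)
  : (A -> R) * (A -> R) :=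
  match k with
  | 0 => (pi1, pi1)
  | k'.+1 =>
      let (hat, prev) := omwu_state P eta pi1 k' in
      let cur := mw_update eta hat (matvec P prev) in
      (mw_update eta hat (matvec P cur), cur)
  end.

(* hat pi^(t) for t >= 1. *)
Definition omwu_hat (P : A -> A -> R) (eta : R) (pi1 : A -> R) (t : nat) : A -> R :=
  (omwu_state P eta pi1 t.-1).1.

(* pi^(t) for t >= 0. *)
Definition omwu_pi (P : A -> A -> R) (eta : R) (pi1 : A -> R) (t : nat) : A -> R :=
  (omwu_state P eta pi1 t).2.

End Defs.

(* Main.v *)
Require Import Defs.
From HB Require Import structures.
From mathcomp Require Import all_boot all_order all_algebra.
From mathcomp Require Import reals sequences exp.
From mathcomp Require Import ring lra.
Import Order.TTheory GRing.Theory Num.Theory.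
Local Open Scope ring_scope.

Section Aux.
Variables (R : realType) (A : finType).

Lemma le_bigmax0 (F : A -> R) (s : seq A) b :
  b \in s -> F b <= \big[Order.max/0]_(i <- s) F i.
Proof.
elim: s => [//|c s IH]; rewrite inE big_cons => /orP [/eqP ->|/IH H].
  by rewrite le_max lexx.
by rewrite le_max H orbT.
Qed.

Lemma swap_mv (P : A -> A -> R) (hskew : skew_symmetric P) (u v : A -> R) :
  \sum_a u a * matvec P v a = - \sum_c v c * matvec P u c.
Proof.
rewrite /matvec.
under eq_bigr do rewrite mulr_sumr.
rewrite exchange_big /= -sumrN; apply: eq_bigr => c _.
rewrite mulr_sumr -sumrN; apply: eq_bigr => a _.
rewrite (hskew a c); ring.
Qed.

Lemma nash_zero (P : A -> A -> R) (hskew : skew_symmetric P)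
  (hfull : full_support P) x : nash_set P x -> forall b, matvec P x b = 0.
Proof.
move=> [[x0 x1] xm] b.
have le0 : forall a, matvec P x a <= 0.
  move=> a; apply: le_trans xm; apply: le_bigmax0; exact: mem_index_enum.
have [s [[[s0 s1] sm] sb]] := hfull b.
have le0s : forall a, matvec P s a <= 0.
  move=> a; apply: le_trans sm; apply: le_bigmax0; exact: mem_index_enum.
have h1 : \sum_a s a * matvec P x a <= 0.
  rewrite -oppr_ge0 -sumrN; apply: sumr_ge0 => a _; rewrite oppr_ge0 mulr_ge0_le0 //.
have h2 : 0 <= \sum_a s a * matvec P x a.
  rewrite swap_mv // oppr_ge0.
  rewrite -oppr_ge0 -sumrN; apply: sumr_ge0 => a _; rewrite oppr_ge0 mulr_ge0_le0 //.
have h3 : \sum_a s a * matvec P x a = 0 by apply/eqP; rewrite eq_le h1 h2.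
rewrite (bigD1 b) //= in h3.
have h4 : \sum_(a | a != b) s a * matvec P x a <= 0.
  rewrite -oppr_ge0 -sumrN; apply: sumr_ge0 => a _; rewrite oppr_ge0 mulr_ge0_le0 //.
have h5 : s b * matvec P x b = 0.
  have := le0 b; have : s b * matvec P x b <= 0 by rewrite mulr_ge0_le0 // ltW.
  lra.
move/eqP: h5; rewrite mulf_eq0 => /orP [/eqP h|/eqP //].
by move: sb; rewrite h ltxx.
Qed.

Lemma mw_pos (eta : R) (q g : A -> R) :
  (forall a, 0 < q a) -> forall a, 0 < mw_update eta q g a.
Proof.
move=> qp a; rewrite /mw_update divr_gt0 ?mulr_gt0 ?expR_gt0 //.
rewrite (bigD1 a) //=; apply: ltr_wpDr; last by rewrite mulr_gt0 ?expR_gt0.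
by apply: sumr_ge0 => b _; rewrite mulr_ge0 ?ltW ?expR_gt0.
Qed.

Lemma KL_shift (eta : R) (q g x : A -> R) :
  (forall a, 0 < q a) -> (forall a, 0 <= x a) -> \sum_a x a = 1 ->
  \sum_a x a * g a = 0 ->
  KL x (mw_update eta q g) = KL x q + ln (\sum_b q b * expR (eta * g b)).
Proof.
move=> qp x0 x1 xg.
set Z := \sum_b q b * expR (eta * g b).
have Zp : 0 < Z.
  case: (pickP A) => [a _|e].
    rewrite /Z (bigD1 a) //=; apply: ltr_wpDr; last by rewrite mulr_gt0 ?expR_gt0.
    by apply: sumr_ge0 => b _; rewrite mulr_ge0 ?ltW ?expR_gt0.
  by move: x1; rewrite big_pred0 // => /eqP; rewrite eq_sym oner_eq0.
rewrite /KL.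
have -> : \sum_a (if x a == 0 then 0 else x a * ln (x a / mw_update eta q g a)) =
  \sum_a ((if x a == 0 then 0 else x a * ln (x a / q a))
          - eta * (x a * g a) + x a * ln Z).
  apply: eq_bigr => a _.
  case: eqP => [->|/eqP xa]; first by rewrite !mul0r mulr0 subr0 addr0.
  have xp : 0 < x a by rewrite lt_def xa x0.
  rewrite /mw_update -/Z.
  have -> : x a / (q a * expR (eta * g a) / Z) = (x a / q a) * ((expR (eta * g a))^-1 * Z).
    rewrite !invfM invrK; ring.
  have e1 : 0 < (expR (eta * g a))^-1 by rewrite invr_gt0 expR_gt0.
  have e2 : 0 < x a / q a by rewrite divr_gt0 ?qp.
  have e3 : 0 < (expR (eta * g a))^-1 * Z by rewrite mulr_gt0.
  rewrite (lnM (x:=x a / q a) (y:=(expR (eta * g a))^-1 * Z)) ?posrE //.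
  rewrite (lnM (x:=(expR (eta * g a))^-1) (y:=Z)) ?posrE //.
  rewrite (lnV (x:=expR (eta * g a))) ?posrE ?expR_gt0 // expRK; ring.
rewrite big_split big_split /= sumrN -mulr_sumr xg -mulr_suml x1.
by rewrite mulr0 oppr0 addr0 mul1r.
Qed.

End Aux.

Theorem mainTheorem5 (R : realType) (A : finType) (P : A -> A -> R)
  (hskew : skew_symmetric P) (hfull : full_support P)
  (eta : R) (heta : 0 < eta)
  (pi1 : A -> R) (hpos : forall a, 0 < pi1 a) (hsum : \sum_(a : A) pi1 a = 1) :
  forall t : nat, (1 <= t)%N ->
    forall x : A -> R,
      is_KL_proj P (omwu_hat P eta pi1 t) x <-> is_KL_proj P (omwu_hat P eta pi1 1) x.
Proof.
set h := fun k => (omwu_state P eta pi1 k).1.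
set p := fun k => (omwu_state P eta pi1 k).2.
have hS : forall k, h k.+1 =
   mw_update eta (h k) (matvec P (mw_update eta (h k) (matvec P (p k)))).
  by move=> k; rewrite /h /p /=; case: (omwu_state P eta pi1 k).
have hp : forall k a, 0 < h k a.
  elim=> [|k IH] a; first exact: hpos.
  by rewrite hS; apply: mw_pos.
have shift : forall k, exists c, forall x, nash_set P x -> KL x (h k.+1) = KL x (h k) + c.
  move=> k; exists (ln (\sum_b h k b * expR (eta * matvec P (mw_update eta (h k) (matvec P (p k))) b))) => x xn; rewrite hS; apply: KL_shift => //.
  - by case: xn => [[]].
  - by case: xn => [[]].
  - rewrite swap_mv //; under eq_bigr do rewrite (@nash_zero R A P hskew hfull x xn) mulr0.
    by rewrite big1 // oppr0.
have key : forall k x, is_KL_proj P (h k) x <-> is_KL_proj P (h 0%N) x.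
  elim=> [//|k IH] x; rewrite -IH.
  have [c Hc] := shift k.
  split=> -[xn H]; split=> // y yn; have := H y yn.
    by rewrite !Hc // lerD2r.
  by rewrite !Hc // lerD2r.
case=> [|k] Ht x; first by move: Ht; rewrite ltnn.
exact: key.
Qed.
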